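(* Let $n,m\ge 1$ and identify $n$-bit strings with elements of the finite field $\mathbb{F}_{2^n}$, with addition $\oplus$ (bitwise XOR) and field multiplication $*$; for a bit $d$ and $b\in\mathbb{F}_{2^n}$ let $d\cdot b$ be $0$ if $d=0$ and $b$ if $d=1$. Let $B_1,\dots,B_m$ be independent uniformly random elements of $\mathbb{F}_{2^n}$ (honest Bob's challenges), and let $R_A$ be a random variable on a finite set, independent of $(B_1,\dots,B_m)$ (Alice's preshared randomness). A classical cheating strategy of Alice is a collection of deterministic functions with values in $\mathbb{F}_{2^n}$ giving her messages $Y_1=f_1(R_A,B_1)$; for $2\le k\le m$, $Y_k^{(d)}=f_k(R_A,B_1,\dots,B_{k-2},B_k,d)$; and $Y_{m+1}^{(d)}=f_{m+1}(R_A,B_1,\dots,B_{m-1},d)$, where $d\in\{0,1\}$ is the bit she attempts to unveil. Let $H_d$ be the event $$Y^{(d)}_{m+1}=\bigoplus_{j=1}^{m}\Big(\prod_{i=j+1}^{m}B_i\Big)*Y^{(d)}_j\ \oplus\ d\cdot\prod_{i=1}^{m}B_i,$$ where $Y^{(d)}_1:=Y_1$, products are taken with $*$ and the empty product equals $1$, and let $p_d=\Pr[H_d]$. Define $c_1=2^{-n}$ and $c_m=2^{-(n+1)}+\sqrt{c_{m-1}}$ for $m\ge2$. Then for every such strategy, $p_0+p_1\le 1+c_m$; i.e. the $(m+1)$-round protocol is $\varepsilon$-binding against classical adversaries with $\varepsilon=c_m$.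
   Context: The multi-round protocol: Alice's agents share independent uniform secrets $a_1,\dots,a_m\in\mathbb{F}_{2^n}$ and Bob's agents independent uniform $b_1,\dots,b_m$. Rounds alternate between two distant locations and consecutive rounds are space-like separated. Round 1 (commit): Bob sends $x_1=b_1$, Alice returns $y_1=d\cdot x_1\oplus a_1$. Rounds $2\le k\le m$ (sustain): Bob sends $x_k=b_k$, Alice returns $y_k=(x_k*a_{k-1})\oplus a_k$. Round $m+1$ (open): Alice sends $d$ and $y_{m+1}=a_m$. Bob accepts iff $y_{m+1}=y_m\oplus b_m*y_{m-1}\oplus b_m*b_{m-1}*y_{m-2}\oplus\dots\oplus b_m*\cdots*b_2*y_1\oplus d\cdot b_m*\cdots*b_1$. The causal constraints imply that Alice's message in round $k$ cannot depend on Bob's message in round $k-1$, and her commit-phase message cannot depend on $d$; this is what the dependencies of the functions $f_k$ in the claim encode. A protocol is $\varepsilon$-binding if $p_0+p_1\le1+\varepsilon$ for all cheating strategies. *)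

(* Defs.v *)
From HB Require Import structures.
From mathcomp Require Import all_boot all_order all_algebra all_field.
From mathcomp Require Import reals.
Set Implicit Arguments. Unset Strict Implicit. Unset Printing Implicit Defensive.
Import Order.TTheory GRing.Theory Num.Theory.
Local Open Scope ring_scope.

(* Rounds are indexed 0..m (0-indexed) : index j : 'I_m.+1 is round j+1.
   Bob's challenges b : {ffun 'I_m -> F}, b i = B_{i+1}.
   f j a b d is Alice's message in round j+1 (the d argument is ignored in
   round 1, which is enforced by a hypothesis of the theorem). *)

(* Causal constraint: the message of round j+1 may only depend on
   B_{i+1} with i+1 < j (i.e. B_1..B_{j-1}) or i = j (i.e. B_{j+1}). *)
Definition allowed (m : nat) (j : 'I_m.+1) (i : 'I_m) : bool :=
  (i.+1 < j)%N || (i == j :> nat).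

Definition accepts (F : finFieldType) (A : finType) (m : nat)
  (f : 'I_m.+1 -> A -> {ffun 'I_m -> F} -> bool -> F)
  (a : A) (b : {ffun 'I_m -> F}) (d : bool) : bool :=
  f ord_max a b d ==
    \sum_(j < m) (\prod_(i < m | (j < i)%N) b i) * f (widen_ord (leqnSn m) j) a b d
    + (if d then \prod_(i < m) b i else 0).

Definition prob_accept (R : realType) (F : finFieldType) (A : finType) (m : nat)
  (mu : A -> R) (f : 'I_m.+1 -> A -> {ffun 'I_m -> F} -> bool -> F) (d : bool) : R :=
  \sum_(a : A) mu a *
     ((#|[set b : {ffun 'I_m -> F} | accepts f a b d]|)%:R
       / (#|{ffun 'I_m -> F}|)%:R).

(* c_1 = 2^-n, c_m = 2^-(n+1) + sqrt c_{m-1}; c 0 is set to c 1 (unused). *)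
Fixpoint cbound (R : realType) (n m : nat) : R :=
  match m with
  | 0%N | 1%N => ((2 : R) ^+ n)^-1
  | k.+1 => ((2 : R) ^+ n.+1)^-1 + Num.sqrt (cbound R n k)
  end.

(* Main.v *)
Require Import Defs.
From HB Require Import structures.
From mathcomp Require Import all_boot all_order all_algebra all_field.
From mathcomp Require Import reals ring lra zify.
Import Order.TTheory GRing.Theory Num.Theory.
Local Open Scope ring_scope.

Lemma cs_sum (R : realType) (I : finType) (a : I -> R) :
  (\sum_i a i) ^+ 2 <= #|I|%:R * \sum_i a i ^+ 2.
Proof.
have H : 0 <= \sum_i \sum_j (a i - a j) ^+ 2.
  by apply: sumr_ge0 => i _; apply: sumr_ge0 => j _; exact: sqr_ge0.
set S := \sum_i a i; set S2 := \sum_i a i ^+ 2.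
have E : \sum_i \sum_j (a i - a j) ^+ 2 =
   \sum_i (#|I|%:R * a i ^+ 2 - a i * S *+ 2 + S2).
  apply: eq_bigr => i _.
  under eq_bigr => j _ do rewrite sqrrB.
  rewrite !big_split /= sumrN sumr_const mulr_natl; congr (_ - _ + _).
  by rewrite sumrMnl /S mulr_sumr.
have E2 : \sum_i (#|I|%:R * a i ^+ 2 - a i * S *+ 2 + S2) =
   #|I|%:R * S2 - S ^+ 2 *+ 2 + #|I|%:R * S2.
  rewrite !big_split /= sumrN -mulr_sumr sumr_const mulr_natl; congr (_ - _ + _).
  by rewrite sumrMnl /S -mulr_suml expr2.
move: H; rewrite E E2 => H; lra.
Qed.


Lemma ind_le1 {R : realType} (c : bool) : (c%:R : R) <= 1. Proof. by case: c. Qed.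
Lemma ind_ge0 {R : realType} (c : bool) : 0 <= (c%:R : R). Proof. by case: c. Qed.
Lemma ind_sq {R : realType} (c : bool) : (c%:R : R) * c%:R = c%:R. Proof. by case: c; rewrite ?mulr1 ?mulr0. Qed.

Lemma sum_ind1 {R : realType} {F : finFieldType} (v0 : F) : \sum_(v : F) ((v == v0)%:R : R) = 1.
Proof. by rewrite (bigD1 v0) //= eqxx big1 ?addr0 // => v /negbTE ->. Qed.

Definition xi {R : realType} {F : finFieldType} (P G Q : F -> F) u v := ((P u == v * G u + Q v)%:R : R).

Lemma sum_ind1' {R : realType} {F : finFieldType} (v0 : F) : \sum_(v : F) ((v0 == v)%:R : R) = 1.
Proof. by rewrite (bigD1 v0) //= eqxx big1 ?addr0 // => v; rewrite eq_sym => /negbTE ->. Qed.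

Lemma step_pt {R : realType} {F : finFieldType} (P G Q : F -> F) (u u' : F) :
  let x := @xi R F P G Q in
  \sum_v x u v * x u' v <=
    (u == u')%:R * (\sum_v x u v) + (#|F|%:R - 1) * (G u == G u')%:R + 1
     - #|F|%:R * (u == u')%:R.
Proof.
rewrite /=.
have [<-|neu] := eqVneq u u'.
  rewrite eqxx /= mulr1n mul1r; under eq_bigr => v _ do rewrite ind_sq.
  by rewrite [X in _ <= X](_ : _ = \sum_v xi P G Q u v) //; ring.

rewrite /= mulr0n mul0r mulr0 subr0 add0r.
have [eG|nG] := eqVneq (G u) (G u').
  rewrite /= mulr1n mulr1 subrK.
  apply: le_trans (_ : \sum_(v : F) (1 : R) <= _); last by rewrite sumr_const.
  apply: ler_sum => v _; rewrite /xi; case: (_ == _); case: (_ == _); rewrite ?mulr0 ?mulr1 //.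
rewrite /= mulr0n mulr0 add0r.
rewrite -(sum_ind1 ((P u - P u') / (G u - G u'))).
apply: ler_sum => v _; rewrite /xi.
have [Hu|_] := eqVneq (P u) (v * G u + Q v); last by rewrite mul0r ind_ge0.
have [Hu'|_] := eqVneq (P u') (v * G u' + Q v); last by rewrite mulr0 ind_ge0.
have -> : (P u - P u') / (G u - G u') = v.
  have nz : G u - G u' != 0 by rewrite subr_eq0.
  by rewrite Hu Hu' (_ : _ - _ = v * (G u - G u')) ?mulfK //; ring.
by rewrite eqxx mulr1.
Qed.

Lemma step_bound {R : realType} {F : finFieldType} (P G Q : F -> F) :
  \sum_u \sum_v ((P u == v * G u + Q v)%:R : R) <=
  #|F|%:R / 2 + #|F|%:R * Num.sqrt (\sum_u \sum_u' ((G u == G u')%:R : R)).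
Proof.
change (\sum_u \sum_v @xi R F P G Q u v <= #|F|%:R / 2 + #|F|%:R * Num.sqrt (\sum_u \sum_u' ((G u == G u')%:R : R))).
set x := @xi R F P G Q.
set N := \sum_u \sum_v x u v.
set C := \sum_u \sum_u' ((G u == G u')%:R : R).
set q : R := #|F|%:R.
have q0 : 0 < q by rewrite ltr0n; apply/card_gt0P; exists 0.
have C0 : q <= C.
  rewrite /q -sum1_card natr_sum; apply: ler_sum => u _.
  rewrite (bigD1 u) //= eqxx lerDl; apply: sumr_ge0 => *; exact: ind_ge0.
have H1 : N ^+ 2 <= q * \sum_v (\sum_u x u v) ^+ 2.
  by rewrite /N exchange_big; apply: cs_sum.
have H2 : \sum_v (\sum_u x u v) ^+ 2 = \sum_u \sum_u' \sum_v x u v * x u' v.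
  transitivity (\sum_v \sum_u \sum_u' x u v * x u' v).
    apply: eq_bigr => v _; rewrite expr2 mulr_suml; apply: eq_bigr => u _; by rewrite mulr_sumr.
  rewrite exchange_big /=; apply: eq_bigr => u _; by rewrite exchange_big.
have H3 : \sum_u \sum_u' \sum_v x u v * x u' v <= N + (q - 1) * C.
  apply: le_trans (_ : \sum_u \sum_u' ((u == u')%:R * (\sum_v x u v) +
     (q - 1) * (G u == G u')%:R + 1 - q * (u == u')%:R) <= _).
    by apply: ler_sum => u _; apply: ler_sum => u' _; apply: step_pt.
  rewrite le_eqVlt; apply/orP; left; apply/eqP.
  have E1 : forall u, \sum_u' ((u == u')%:R * (\sum_v x u v) +
     (q - 1) * (G u == G u')%:R + 1 - q * (u == u')%:R) =
     (\sum_v x u v) + (q - 1) * \sum_u' (G u == G u')%:R + q - q.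
    move=> u; rewrite !big_split /= sumrN -!mulr_sumr -mulr_suml sumr_const.
    rewrite -/q.
    by rewrite sum_ind1' mul1r mulr1.
  under eq_bigr => u _ do rewrite E1.
  rewrite !big_split /= sumrN -mulr_sumr sumr_const -/N -/C -/q.
  rewrite -[_ *+ #|F|]mulr_natl -/q. ring.
have Hs := sqr_sqrtr (le_trans (ltW q0) C0).
have s0 := sqrtr_ge0 C.
set s := Num.sqrt C in Hs s0 *.
rewrite -Hs in C0 H3.
have H4 : N ^+ 2 <= q * (N + (q - 1) * s ^+ 2) by rewrite (le_trans H1) // H2 ler_wpM2l // ltW.
rewrite leNgt; apply/negP => Hlt.
have qs0 : 0 <= q * s by rewrite mulr_ge0 // ltW.
have h5 : (q * s) * (q * s) < (N - q / 2) * (N - q / 2).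
  apply: ltr_pM => //; lra.
have h6 : q * q <= q * s ^+ 2 by rewrite ler_pM2l.
have h7 : 0 < q * q by rewrite mulr_gt0.
nra.
Qed.

Definition upd {F : finFieldType} {M : nat} (b : {ffun 'I_M -> F}) (i : 'I_M) (u : F) :
  {ffun 'I_M -> F} := [ffun j => if j == i then u else b j].

Lemma updE {F : finFieldType} {M : nat} (b : {ffun 'I_M -> F}) i u j :
  upd b i u j = if j == i then u else b j.
Proof. by rewrite ffunE. Qed.

Lemma upd_upd {F : finFieldType} {M : nat} (b : {ffun 'I_M -> F}) i u u' :
  upd (upd b i u) i u' = upd b i u'.
Proof. by apply/ffunP => j; rewrite !updE; case: (j == i). Qed.

Lemma upd_id {F : finFieldType} {M : nat} (b : {ffun 'I_M -> F}) i :
  upd b i (b i) = b.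
Proof. by apply/ffunP => j; rewrite !updE; case: eqP => // ->. Qed.

Lemma avg_upd {R : realType} {F : finFieldType} {M : nat} (i : 'I_M)
   (phi : {ffun 'I_M -> F} -> R) :
  \sum_b \sum_(u : F) phi (upd b i u) = #|F|%:R * \sum_b phi b.
Proof.
pose sg (p : {ffun 'I_M -> F} * F) := (upd p.1 i p.2, p.1 i).
have sgK : cancel sg sg.
  by case=> b u; rewrite /sg /= upd_upd upd_id updE eqxx.
rewrite pair_big /=.
transitivity (\sum_p phi (sg p).1) => //.
have -> : \sum_(p : {ffun 'I_M -> F} * F) phi (sg p).1 = \sum_(p : {ffun 'I_M -> F} * F) phi p.1.
  by symmetry; rewrite (reindex_inj (can_inj sgK)).
rewrite -(pair_big xpredT xpredT (fun b (u : F) => phi b)) /= mulr_sumr; apply: eq_bigr => b _.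
by rewrite sumr_const mulr_natl.
Qed.
Definition bn {F : finFieldType} {m' : nat} (b : {ffun 'I_m'.+1 -> F}) (k : nat) : F :=
  b (inord k).

Fixpoint T {F : finFieldType} {m' : nat} (Dn : nat -> {ffun 'I_m'.+1 -> F} -> F)
  (k : nat) (b : {ffun 'I_m'.+1 -> F}) : F :=
  match k with 0%N => -1 | k'.+1 => bn b k' * T Dn k' b + Dn k' b end.

Definition depD {F : finFieldType} {m' : nat} (Dn : nat -> {ffun 'I_m'.+1 -> F} -> F) :=
  forall k, (k <= m'.+1)%N -> forall b b' : {ffun 'I_m'.+1 -> F},
   (forall i : 'I_m'.+1, ((i.+1 < k) || (i == k :> nat))%N -> b i = b' i) ->
   Dn k b = Dn k b'.

Lemma T_dep {F : finFieldType} {m' : nat} (Dn : nat -> {ffun 'I_m'.+1 -> F} -> F) :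
  depD Dn -> forall k, (k <= m'.+1)%N -> forall b b' : {ffun 'I_m'.+1 -> F},
   (forall i : 'I_m'.+1, (i < k)%N -> b i = b' i) -> T Dn k b = T Dn k b'.
Proof.
move=> hD; elim=> [//|k IH] hk b b' hb /=.
rewrite /bn hb ?inordK // ?(IH (ltnW hk) b b') ?(hD k (ltnW hk) b b') //.
- by move=> i hi; apply: hb; case/orP: hi => [|/eqP ->]; lia.
- by move=> i hi; apply: hb; apply: ltnW.
Qed.
Lemma cbound_ge0 (R : realType) n k : 0 <= cbound R n k.
Proof.
case: k => [|k]; first by rewrite /= invr_ge0 exprn_ge0.
case: k => [|k]; first by rewrite /= invr_ge0 exprn_ge0.
by rewrite /= addr_ge0 ?sqrtr_ge0 // invr_ge0 exprn_ge0.
Qed.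

Lemma TS {F : finFieldType} {m' : nat} (Dn : nat -> {ffun 'I_m'.+1 -> F} -> F) k b :
  T Dn k.+1 b = bn b k * T Dn k b + Dn k b.
Proof. by []. Qed.

Lemma cbSS (R : realType) n k :
  cbound R n k.+2 = ((2 : R) ^+ n.+1)^-1 + Num.sqrt (cbound R n k.+1).
Proof. by []. Qed.

Lemma claim {R : realType} {F : finFieldType} {m' : nat} (n : nat)
  (Dn : nat -> {ffun 'I_m'.+1 -> F} -> F) :
  depD Dn -> (forall b, Dn 0%N b = 0) -> (#|F|%:R : R) = 2 ^+ n ->
  forall k, (0 < k <= m'.+1)%N -> forall h : {ffun 'I_m'.+1 -> F} -> F,
   (forall b b' : {ffun 'I_m'.+1 -> F}, (forall i : 'I_m'.+1, (i.+1 < k)%N -> b i = b' i) -> h b = h b') ->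
   \sum_b ((T Dn k b == h b)%:R : R) <= cbound R n k * #|{ffun 'I_m'.+1 -> F}|%:R.
Proof.
move=> hD hD0 hq.
set Q : R := #|{ffun 'I_m'.+1 -> F}|%:R.
have q0 : (0 : R) < #|F|%:R by rewrite ltr0n; apply/card_gt0P; exists 0.
case=> [//|k]; elim: k => [|k IH] hk h hh.
-
  set b0 : {ffun 'I_m'.+1 -> F} := [ffun => 0].
  have hc : forall b, h b = h b0 by move=> b; apply: hh => i.
  set i0 : 'I_m'.+1 := inord 0.
  have E : #|F|%:R * \sum_b ((T Dn 1 b == h b)%:R : R) = Q.
    rewrite -(avg_upd i0) /Q -sum1_card natr_sum; apply: eq_bigr => b _.
    under eq_bigr => u _ do rewrite /= hD0 addr0 /bn -/i0 updE eqxx hc mulrN1 eqr_oppLR.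
    by rewrite sum_ind1.
  rewrite /= -hq -E mulrA mulVf ?mul1r // gt_eqF //.
-
  have hk1 : (k.+1 <= m')%N by case/andP: hk.
  have IH' := IH (ltnW hk1 : (0 < k.+1 <= m'.+1)%N).
  have hk' : (k < m'.+1)%N by apply: leq_trans hk1; lia.
  set i1 : 'I_m'.+1 := inord k.
  set i2 : 'I_m'.+1 := inord k.+1.
  have v1 : (i1 : nat) = k by rewrite /i1 inordK.
  have v2 : (i2 : nat) = k.+1 by rewrite /i2 inordK.
  set q : R := #|F|%:R.
  set phi := fun b => ((T Dn k.+2 b == h b)%:R : R).
  set S := \sum_b phi b.
  pose G b u := T Dn k.+1 (upd b i1 u).
  pose C b := \sum_u \sum_u' ((G b u == G b u')%:R : R).
  have EA : q * (q * S) = \sum_b \sum_u \sum_v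
       ((h (upd b i1 u) == v * G b u + Dn k.+1 (upd b i2 v))%:R : R).
    rewrite /S -(avg_upd i2) -(avg_upd i1).
    apply: eq_bigr => b _; apply: eq_bigr => u _; apply: eq_bigr => v _.
    rewrite /phi TS eq_sym; congr ((_ == _)%:R).
    + apply: hh => i hi; rewrite updE; case: eqP => // ei.
      by move: hi; rewrite ei v2 ltnn.
    + rewrite /bn -/i2 updE eqxx; congr (_ * _ + _).
      * rewrite /G; apply: (@T_dep F m' Dn hD k.+1 (ltnW hk1)) => i hi; rewrite updE; case: eqP => // ei.
        by move: hi; rewrite ei v2 ltnn.
      * apply: (hD k.+1 hk') => i hi; rewrite !updE; case: (i == i2) => //.
        case: eqP => // ei; move: hi; rewrite ei v1; lia.
  have EC : q * q * S <= Q * (q / 2) + q * \sum_b Num.sqrt (C b).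
    have -> : Q * (q / 2) + q * \sum_b Num.sqrt (C b) =
        \sum_b (q / 2 + q * Num.sqrt (C b)).
      by rewrite big_split /= sumr_const -mulr_sumr /Q mulr_natl.
    rewrite -mulrA EA.
    apply: ler_sum => b _; exact: step_bound.
  set c := cbound R n k.+1.
  have c0 : 0 <= c := cbound_ge0 R n k.+1.
  have ED : \sum_b C b <= q * (q * (c * Q)).
    have -> : \sum_b C b =
              \sum_u' \sum_b \sum_u ((G b u == G b u')%:R : R).
      transitivity (\sum_b \sum_u' \sum_u ((G b u == G b u')%:R : R)).
        by apply: eq_bigr => b _; rewrite /C exchange_big.
      by rewrite exchange_big.
    have -> : q * (q * (c * Q)) = \sum_(u' : F) (q * (c * Q)).
      by rewrite sumr_const -/q mulr_natl.
    apply: ler_sum => u' _.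
    pose h' b := T Dn k.+1 (upd b i1 u').
    have -> : \sum_b \sum_u ((G b u == G b u')%:R : R) =
              \sum_b \sum_u ((T Dn k.+1 (upd b i1 u) == h' (upd b i1 u))%:R : R).
      by apply: eq_bigr => b _; apply: eq_bigr => u _; rewrite /h' upd_upd.
    rewrite (avg_upd i1 (fun b => ((T Dn k.+1 b == h' b)%:R : R))) ler_pM2l //.
    apply: IH' => b b' hbb; apply: (@T_dep F m' Dn hD k.+1 (ltnW hk1)) => i hi.
    rewrite !updE; case: eqP => // ei; apply: hbb.
    have : (i : nat) != k by apply/eqP => e; apply: ei; apply: val_inj; rewrite /= e v1.
    lia.
  have EF : \sum_b Num.sqrt (C b) <= Q * q * Num.sqrt c.
    rewrite -(ler_pXn2r (_ : (0 < 2)%N)) ?nnegrE //; last first.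
    - by rewrite !mulr_ge0 ?sqrtr_ge0 // ltW.
    - by apply: sumr_ge0 => b _; exact: sqrtr_ge0.
    apply: le_trans (cs_sum _ _ (fun b => Num.sqrt (C b))) _; rewrite -/Q.
    have -> : \sum_b Num.sqrt (C b) ^+ 2 = \sum_b C b.
      apply: eq_bigr => b _; rewrite sqr_sqrtr //.
      by apply: sumr_ge0 => u _; apply: sumr_ge0 => u' _; exact: ind_ge0.
    rewrite !exprMn sqr_sqrtr //.
    have Q0 : 0 <= Q by [].
    apply: le_trans (ler_wpM2l Q0 ED) _.
    by rewrite le_eqVlt; apply/orP; left; apply/eqP; ring.
  rewrite cbSS -/c exprS -hq -/q.
  have qn : q != 0 by rewrite gt_eqF.
  rewrite -(ler_pM2l q0) -(ler_pM2l q0) -/q mulrA.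
  apply: le_trans EC _.
  have EE : q * (q * (((2 * q)^-1 + Num.sqrt c) * Q)) = Q * (q / 2) + q * (Q * q * Num.sqrt c).
    by field.
  rewrite EE lerD2l ler_pM2l //.

Qed.
Definition Tc {F : finFieldType} {m' : nat} (Dn : nat -> {ffun 'I_m'.+1 -> F} -> F)
  (k : nat) (b : {ffun 'I_m'.+1 -> F}) : F :=
  \sum_(0 <= j < k) (\prod_(j.+1 <= i < k) bn b i) * Dn j b - \prod_(0 <= i < k) bn b i.

Lemma T_closed {F : finFieldType} {m' : nat} (Dn : nat -> {ffun 'I_m'.+1 -> F} -> F) k b :
  T Dn k b = Tc Dn k b.
Proof.
rewrite /Tc; elim: k => [|k IH]; first by rewrite !big_geq // sub0r.
rewrite TS IH (big_nat_recr k) //= [\prod_(k.+1 <= i < k.+1) _]big_geq // mul1r [\prod_(0 <= i < k.+1) _](big_nat_recr k) //=.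
rewrite mulrBr mulr_sumr.
have -> : \sum_(0 <= i < k) bn b k * ((\prod_(i.+1 <= i0 < k) bn b i0) * Dn i b) =
  \sum_(0 <= j < k) (\prod_(j.+1 <= i < k.+1) bn b i) * Dn j b.
  apply: eq_big_nat => j /andP [_ hj]; rewrite (big_nat_recr k) //= ; ring.
ring.
Qed.

Lemma card_set_sum {R : realType} {T : finType} (P : pred T) :
  (#|[set b | P b]|%:R : R) = \sum_b (P b)%:R.
Proof.
rewrite -sum1_card natr_sum big_mkcond /=; apply: eq_bigr => b _.
by rewrite inE; case: (P b).
Qed.
Theorem mainTheorem2 (R : realType) (n m : nat) (F : finFieldType)
  (A : finType) (mu : A -> R)
  (f : 'I_m.+1 -> A -> {ffun 'I_m -> F} -> bool -> F) :
  (0 < n)%N -> (0 < m)%N -> #|F| = (2 ^ n)%N ->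
  (forall a, 0 <= mu a) -> \sum_(a : A) mu a = 1 ->
  (forall (j : 'I_m.+1) a (b b' : {ffun 'I_m -> F}) d,
      (forall i : 'I_m, allowed j i -> b i = b' i) -> f j a b d = f j a b' d) ->
  (forall a b, f ord0 a b false = f ord0 a b true) ->
  prob_accept mu f false + prob_accept mu f true <= 1 + cbound R n m.
Proof.
case: m f => [//|m'] f _ _ hF hmu hsum hf hf0.
have hq : (#|F|%:R : R) = 2 ^+ n by rewrite hF natrX.
set Q : R := #|{ffun 'I_m'.+1 -> F}|%:R.
have Q0 : 0 < Q by rewrite ltr0n; apply/card_gt0P; exists [ffun => 0].
set c := cbound R n m'.+1.
suff H : forall a, (#|[set b | accepts f a b false]|%:R / Q +
                    #|[set b | accepts f a b true]|%:R / Q) <= 1 + c.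
  rewrite /prob_accept -big_split /=.
  apply: le_trans (_ : \sum_a mu a * (1 + c) <= _).
    by apply: ler_sum => a _; rewrite -mulrDr ler_wpM2l.
  by rewrite -mulr_suml hsum mul1r.
move=> a.
pose Dn k b := f (inord k) a b false - f (inord k) a b true.
have hD : depD Dn.
  move=> k hk b b' hb; rewrite /Dn !(hf (inord k) a b b') // => i; rewrite /allowed inordK //; exact: hb.
have hD0 : forall b, Dn 0%N b = 0.
  by move=> b; rewrite /Dn (_ : inord 0 = ord0) ?hf0 ?subrr //; apply: val_inj; rewrite /= inordK.
have key : forall b, accepts f a b false -> accepts f a b true -> T Dn m'.+1 b == Dn m'.+1 b.
  move=> b; rewrite /accepts => /eqP e0 /eqP e1.
  have cv : forall d, \sum_(j < m'.+1) (\prod_(i < m'.+1 | (j < i)%N) b i) *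
                f (widen_ord (leqnSn m'.+1) j) a b d =
      \sum_(0 <= j < m'.+1) (\prod_(j.+1 <= i < m'.+1) bn b i) * f (inord j) a b d.
    move=> d; rewrite big_mkord; apply: eq_bigr => j _.
    rewrite big_geq_mkord; congr (_ * _).
      by apply: eq_bigr => i _; rewrite /bn inord_val.
    rewrite (_ : widen_ord _ j = inord j) //; apply: val_inj; rewrite /= inordK //; have := ltn_ord j; lia.
  have cp : \prod_(i < m'.+1) b i = \prod_(0 <= i < m'.+1) bn b i.
    by rewrite big_mkord; apply: eq_bigr => i _; rewrite /bn inord_val.
  have om : (ord_max : 'I_m'.+2) = inord m'.+1 by apply: val_inj; rewrite /= inordK.
  rewrite cv om in e0; rewrite cv om cp in e1.
  rewrite T_closed /Tc /Dn e0 e1 addr0.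
  apply/eqP; rewrite opprD addrA -sumrB; congr (_ - _).
  by apply: eq_bigr => j _; rewrite mulrBr.
have hc := @claim R F m' n Dn hD hD0 hq m'.+1 (leqnn _) (Dn m'.+1).
have hc' : \sum_b ((T Dn m'.+1 b == Dn m'.+1 b)%:R : R) <= c * Q.
  apply: hc => b b' hb; apply: (hD m'.+1 (leqnn _)) => i /orP [|/eqP e]; first exact: hb.
  by move: (ltn_ord i); rewrite e ltnn.
set S0 := [set b | accepts f a b false].
set S1 := [set b | accepts f a b true].
set E := [set b | T Dn m'.+1 b == Dn m'.+1 b].
have hn : (#|S0| + #|S1| <= #|{ffun 'I_m'.+1 -> F}| + #|E|)%N.
  rewrite -cardsUI leq_add ?max_card //; apply: subset_leq_card.
  by apply/subsetP => b; rewrite !inE => /andP [h0 h1]; apply: key.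
have hr : (#|S0|%:R + #|S1|%:R : R) <= Q + c * Q.
  apply: le_trans (_ : Q + #|E|%:R <= _); last by rewrite lerD2l /E card_set_sum.
  by rewrite -!natrD ler_nat.
rewrite -mulrDl ler_pdivrMr // mulrDl mul1r.
exact: hr.
Qed.
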